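(* Let $A\in B(\mathbb{H})$ with $A\ge0$ and let $X,Y\in B_A(\mathbb{H})$. Then \[ w_A(Y^{\sharp_A}X)\le\frac14\big\|XX^{\sharp_A}+YY^{\sharp_A}\big\|_A+\frac12 w_A(XY^{\sharp_A}). \]
   Context: $\mathbb{H}$ is a complex Hilbert space, $B(\mathbb{H})$ the bounded linear operators on it, $O$ the zero operator. For a positive operator $A\in B(\mathbb{H})$ ($A\ge0$) set $\langle x,y\rangle_A=\langle Ax,y\rangle$ and $\|x\|_A=\sqrt{\langle x,x\rangle_A}$; $A>0$ means $\langle Ax,x\rangle>0$ for all $x\ne0$. For $T\in B(\mathbb{H})$: $\|T\|_A=\sup\{\|Tx\|_A/\|x\|_A: x\in\overline{R(A)},x\ne0\}$, where $R(A)$ is the range of $A$; $W_A(T)=\{\langle Tx,x\rangle_A:x\in\mathbb{H},\|x\|_A=1\}$, $w_A(T)=\sup\{|\lambda|:\lambda\in W_A(T)\}$ and $m_A(T)=\inf\{|\lambda|:\lambda\in W_A(T)\}$. $B_A(\mathbb{H})$ is the set of $T\in B(\mathbb{H})$ for which some $R\in B(\mathbb{H})$ satisfies $AR=T^*A$; for such $T$, $T^{\sharp_A}$ denotes the distinguished such $R$, namely the unique solution of $AR=T^*A$ with range contained in $\overline{R(A)}$ (when $A>0$ it is the unique solution). $\mathrm{Re}_A(T)=\frac12(T+T^{\sharp_A})$. *)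

(* Defs.v *)
From Stdlib Require Import Reals ClassicalEpsilon.
Open Scope R_scope.
Set Implicit Arguments.

Record C := mkC { Cre : R; Cim : R }.
Definition C0 : C := mkC 0 0.
Definition C1 : C := mkC 1 0.
Definition Cadd (a b : C) : C := mkC (Cre a + Cre b) (Cim a + Cim b).
Definition Cmul (a b : C) : C :=
  mkC (Cre a * Cre b - Cim a * Cim b) (Cre a * Cim b + Cim a * Cre b).
Definition Cconj (a : C) : C := mkC (Cre a) (- Cim a).
Definition Cmod (a : C) : R := sqrt (Cre a ^ 2 + Cim a ^ 2).

Record CHilbert := {
  hv :> Type;
  hadd : hv -> hv -> hv;
  hzero : hv;
  hopp : hv -> hv;
  hscal : C -> hv -> hv;
  hinner : hv -> hv -> C;
  hadd_assoc : forall x y z, hadd x (hadd y z) = hadd (hadd x y) z;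
  hadd_comm : forall x y, hadd x y = hadd y x;
  hadd_0 : forall x, hadd x hzero = x;
  hadd_opp : forall x, hadd x (hopp x) = hzero;
  hscal_1 : forall x, hscal C1 x = x;
  hscal_assoc : forall a b x, hscal a (hscal b x) = hscal (Cmul a b) x;
  hscal_addv : forall a x y, hscal a (hadd x y) = hadd (hscal a x) (hscal a y);
  hscal_adds : forall a b x, hscal (Cadd a b) x = hadd (hscal a x) (hscal b x);
  hinner_addl : forall x y z, hinner (hadd x y) z = Cadd (hinner x z) (hinner y z);
  hinner_scall : forall a x y, hinner (hscal a x) y = Cmul a (hinner x y);
  hinner_conj : forall x y, hinner y x = Cconj (hinner x y);
  hinner_pos : forall x, 0 <= Cre (hinner x x);
  hinner_def : forall x, hinner x x = C0 -> x = hzero;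
  hcomplete : forall u : nat -> hv,
    (forall eps, 0 < eps -> exists N, forall m n, (N <= m)%nat -> (N <= n)%nat ->
        sqrt (Cre (hinner (hadd (u m) (hopp (u n))) (hadd (u m) (hopp (u n))))) < eps) ->
    exists l, forall eps, 0 < eps -> exists N, forall n, (N <= n)%nat ->
        sqrt (Cre (hinner (hadd (u n) (hopp l)) (hadd (u n) (hopp l)))) < eps
}.

Arguments hadd {_}. Arguments hzero {_}. Arguments hopp {_}.
Arguments hscal {_}. Arguments hinner {_}.

Section Ops.
Context {H : CHilbert}.

Definition hsub (x y : H) : H := hadd x (hopp y).
Definition hnorm (x : H) : R := sqrt (Cre (hinner x x)).

Definition is_linear (T : H -> H) : Prop :=
  (forall x y, T (hadd x y) = hadd (T x) (T y)) /\
  (forall a x, T (hscal a x) = hscal a (T x)).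
Definition is_bounded (T : H -> H) : Prop :=
  is_linear T /\ exists M, forall x, hnorm (T x) <= M * hnorm x.

Definition positive_op (A : H -> H) : Prop :=
  is_bounded A /\ forall x, Cim (hinner (A x) x) = 0 /\ 0 <= Cre (hinner (A x) x).

Definition innerA (A : H -> H) (x y : H) : C := hinner (A x) y.
Definition normA (A : H -> H) (x : H) : R := sqrt (Cre (innerA A x x)).

Definition in_closure_range (A : H -> H) (x : H) : Prop :=
  forall eps, 0 < eps -> exists y, hnorm (hsub x (A y)) < eps.

Definition is_adjoint (T S : H -> H) : Prop :=
  forall x y, hinner (T x) y = hinner x (S y).

Definition solves_AR (A T R0 : H -> H) : Prop :=
  is_bounded R0 /\ exists S, is_adjoint T S /\ forall x, A (R0 x) = S (A x).

Definition in_BA (A T : H -> H) : Prop :=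
  is_bounded T /\ exists R0, solves_AR A T R0.

Definition is_sharpA (A T R0 : H -> H) : Prop :=
  solves_AR A T R0 /\ forall x, in_closure_range A (R0 x).

(* supremum of a set of nonnegative reals (the empty set has sup 0) *)
Definition supR (E : R -> Prop) : R :=
  epsilon (inhabits 0) (fun l => is_lub (fun r => E r \/ r = 0) l).

Definition opnormA (A T : H -> H) : R :=
  supR (fun r => exists x, in_closure_range A x /\ x <> hzero /\
                           r = normA A (T x) / normA A x).

Definition numrangeA (A T : H -> H) (lam : C) : Prop :=
  exists x, normA A x = 1 /\ lam = innerA A (T x) x.
Definition wA (A T : H -> H) : R :=
  supR (fun r => exists lam, numrangeA A T lam /\ r = Cmod lam).

End Ops.

(* Main.v *)
Require Import Defs.
From Stdlib Require Import Reals ClassicalEpsilon Lra Psatz ZArith Lia.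
Open Scope R_scope.
Local Notation C := Defs.C.
Local Notation C0 := Defs.C0.
Local Notation C1 := Defs.C1.

Lemma Ceq (a b : C) : Cre a = Cre b -> Cim a = Cim b -> a = b.
Proof. destruct a, b; simpl; intros; subst; reflexivity. Qed.

Ltac csimpl := cbv [Cadd Cmul Cconj Defs.C0 Defs.C1] in *; cbn [Cre Cim] in *.

Lemma sqrt_le_sq (x k : R) : 0 <= k -> x <= k * k -> sqrt x <= k.
Proof. intros Hk Hx. rewrite <- (sqrt_square k Hk). apply sqrt_le_1_alt. exact Hx. Qed.

Lemma le_of_sq (d t : R) : 0 <= t -> d * d <= t * t -> d <= t.
Proof. intros; nra. Qed.

Lemma Cmod_ge0 a : 0 <= Cmod a.
Proof. apply sqrt_pos. Qed.

Lemma Cmod_sq a : Cmod a * Cmod a = Cre a * Cre a + Cim a * Cim a.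
Proof. unfold Cmod. rewrite sqrt_sqrt; [ring| nra]. Qed.

Lemma Cmod_mul a b : Cmod (Cmul a b) = Cmod a * Cmod b.
Proof. unfold Cmod. rewrite <- sqrt_mult by nra. f_equal. csimpl. ring. Qed.

Lemma Cmod_conj a : Cmod (Cconj a) = Cmod a.
Proof. unfold Cmod. f_equal. csimpl. ring. Qed.

Lemma Cmod_real r : Cmod (mkC r 0) = Rabs r.
Proof. unfold Cmod. cbn [Cre Cim]. replace (r ^ 2 + 0 ^ 2) with (Rsqr r) by (unfold Rsqr; ring). apply sqrt_Rsqr_abs. Qed.

Lemma Cmod_tri a b : Cmod (Cadd a b) <= Cmod a + Cmod b.
Proof.
  apply sqrt_le_sq. pose proof (Cmod_ge0 a); pose proof (Cmod_ge0 b); lra.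
  pose proof (Cmod_sq a); pose proof (Cmod_sq b).
  pose proof (Cmod_ge0 a); pose proof (Cmod_ge0 b).
  assert (Hd : Cre a * Cre b + Cim a * Cim b <= Cmod a * Cmod b).
  { apply le_of_sq. nra. replace (Cmod a * Cmod b * (Cmod a * Cmod b)) with ((Cmod a * Cmod a) * (Cmod b * Cmod b)) by ring.
    rewrite H, H0. pose proof (Rle_0_sqr (Cre a * Cim b - Cim a * Cre b)); unfold Rsqr in *; nra. }
  csimpl. nra.
Qed.

Lemma Re_le_Cmod a : Cre a <= Cmod a.
Proof. apply le_of_sq. apply Cmod_ge0. rewrite Cmod_sq. nra. Qed.

Lemma Cmod_eq0 a : Cmod a = 0 -> a = C0.
Proof. intro E. pose proof (Cmod_sq a). rewrite E in H. apply Ceq; csimpl; nra. Qed.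

Lemma hadd_0_l {H : CHilbert} (x : H) : hadd hzero x = x.
Proof. rewrite hadd_comm; apply hadd_0. Qed.

Lemma hadd_cancel {H : CHilbert} (x y z : H) : hadd x y = hadd x z -> y = z.
Proof. intro E. assert (E2: hadd (hopp x) (hadd x y) = hadd (hopp x) (hadd x z)) by (rewrite E; reflexivity).
 rewrite !hadd_assoc, (hadd_comm _ (hopp x) x), hadd_opp, !hadd_0_l in E2. exact E2. Qed.

Lemma hopp_unique {H : CHilbert} (x y : H) : hadd x y = hzero -> y = hopp x.
Proof. intro E. apply (hadd_cancel x). rewrite E, hadd_opp; reflexivity. Qed.

Lemma hscal_0 {H : CHilbert} (x : H) : hscal C0 x = hzero.
Proof. assert (E: hscal (Cadd C0 C0) x = hadd (hscal C0 x) (hscal C0 x)) by apply hscal_adds.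
  replace (Cadd C0 C0) with C0 in E by (apply Ceq; csimpl; lra).
  apply (hadd_cancel (hscal C0 x)). rewrite hadd_0. symmetry; exact E. Qed.

Lemma hscal_add_0 {H : CHilbert} (a b : C) (x : H) : Cre a + Cre b = 0 -> Cim a + Cim b = 0 ->
  hadd (hscal a x) (hscal b x) = hzero.
Proof. intros. rewrite <- hscal_adds. replace (Cadd a b) with C0 by (apply Ceq; csimpl; lra). apply hscal_0. Qed.

Lemma hopp_scal {H : CHilbert} (x : H) : hopp x = hscal (mkC (-1) 0) x.
Proof. symmetry; apply hopp_unique. rewrite <- (hscal_1 _ x) at 1. apply hscal_add_0; csimpl; lra. Qed.

Lemma hopp_hopp {H : CHilbert} (x : H) : hopp (hopp x) = x.
Proof. symmetry. apply hopp_unique. rewrite hadd_comm. apply hadd_opp. Qed.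

Lemma hopp_add {H : CHilbert} (x y : H) : hopp (hadd x y) = hadd (hopp x) (hopp y).
Proof. symmetry. apply hopp_unique.
  rewrite <- hadd_assoc, (hadd_assoc _ y), (hadd_comm _ y (hopp x)), <- (hadd_assoc _ (hopp x)), hadd_opp, hadd_0,
    hadd_opp. reflexivity. Qed.

Lemma hopp_zero {H : CHilbert} : hopp (@hzero H) = hzero.
Proof. symmetry. apply hopp_unique. apply hadd_0. Qed.

Lemma lin_zero {H : CHilbert} (T : H -> H) : is_linear T -> T hzero = hzero.
Proof. intros [_ Hs]. rewrite <- (hscal_0 (@hzero H)) at 1. rewrite Hs. apply hscal_0. Qed.

Lemma lin_opp {H : CHilbert} (T : H -> H) x : is_linear T -> T (hopp x) = hopp (T x).
Proof. intros [_ Hs]. rewrite !hopp_scal, Hs. reflexivity. Qed.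

Lemma lin_comb {H : CHilbert} (T : H -> H) a b (x y : H) : is_linear T ->
  T (hadd (hscal a x) (hscal b y)) = hadd (hscal a (T x)) (hscal b (T y)).
Proof. intros [Ha Hs]. rewrite Ha, !Hs. reflexivity. Qed.

Definition isform {H : CHilbert} (f : H -> H -> C) : Prop :=
  (forall x y z, f (hadd x y) z = Cadd (f x z) (f y z)) /\
  (forall a x y, f (hscal a x) y = Cmul a (f x y)) /\
  (forall x y, f y x = Cconj (f x y)) /\
  (forall x, 0 <= Cre (f x x)).

Definition nf {H : CHilbert} (f : H -> H -> C) (x : H) : R := sqrt (Cre (f x x)).

Lemma hinner_form (H : CHilbert) : isform (@hinner H).
Proof. split; [|split; [|split]]. apply hinner_addl. apply hinner_scall. apply hinner_conj. apply hinner_pos. Qed.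

Lemma f_im {H : CHilbert} (f : H -> H -> C) x : isform f -> Cim (f x x) = 0.
Proof. intros (_&_&Hc&_). pose proof (Hc x x) as E. assert (E2 := f_equal Cim E). csimpl. lra. Qed.

Lemma f_addr {H : CHilbert} (f : H -> H -> C) x y z : isform f -> f x (hadd y z) = Cadd (f x y) (f x z).
Proof. intros (Ha&_&Hc&_). rewrite Hc, Ha, (Hc y x), (Hc z x). apply Ceq; csimpl; ring. Qed.

Lemma f_scalr {H : CHilbert} (f : H -> H -> C) a x y : isform f -> f x (hscal a y) = Cmul (Cconj a) (f x y).
Proof. intros (_&Hs&Hc&_). rewrite Hc, Hs, (Hc y x). apply Ceq; csimpl; ring. Qed.

Lemma f_bil {H : CHilbert} (f : H -> H -> C) a b c d (x1 y1 x2 y2 : H) : isform f ->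
  f (hadd (hscal a x1) (hscal b y1)) (hadd (hscal c x2) (hscal d y2)) =
  Cadd (Cadd (Cmul (Cmul a (Cconj c)) (f x1 x2)) (Cmul (Cmul a (Cconj d)) (f x1 y2)))
       (Cadd (Cmul (Cmul b (Cconj c)) (f y1 x2)) (Cmul (Cmul b (Cconj d)) (f y1 y2))).
Proof. intro F. pose proof F as (Ha&Hs&_&_).
  rewrite Ha, !Hs, !(f_addr f _ _ _ F), !(f_scalr f _ _ _ F). apply Ceq; csimpl; ring. Qed.

Lemma f_quad {H : CHilbert} (f : H -> H -> C) a b (x y : H) : isform f ->
  Cre (f (hadd (hscal a x) (hscal b y)) (hadd (hscal a x) (hscal b y))) =
  (Cre a * Cre a + Cim a * Cim a) * Cre (f x x) + (Cre b * Cre b + Cim b * Cim b) * Cre (f y y)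
  + 2 * ((Cre a * Cre b + Cim a * Cim b) * Cre (f x y) - (Cim a * Cre b - Cre a * Cim b) * Cim (f x y)).
Proof. intro F. rewrite (f_bil f a b a b x y x y F). pose proof F as (_&_&Hc&_).
  rewrite (Hc x y). pose proof (f_im f x F). pose proof (f_im f y F). csimpl. nra. Qed.

Lemma f_CS2 {H : CHilbert} (f : H -> H -> C) (x y : H) : isform f ->
  Cre (f x y) * Cre (f x y) + Cim (f x y) * Cim (f x y) <= Cre (f x x) * Cre (f y y).
Proof. intro F. pose proof F as (_&_&_&Hp).
  set (p1 := Cre (f x y)). set (p2 := Cim (f x y)). set (P := Cre (f x x)). set (Q := Cre (f y y)).
  pose proof (Hp (hadd (hscal (mkC Q 0) x) (hscal (mkC (-p1) (-p2)) y))) as E1.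
  rewrite (f_quad f _ _ x y F) in E1. cbn [Cre Cim] in E1. fold p1 p2 P Q in E1.
  pose proof (Hp (hadd (hscal (mkC (-p1) p2) x) (hscal (mkC P 0) y))) as E2.
  rewrite (f_quad f _ _ x y F) in E2. cbn [Cre Cim] in E2. fold p1 p2 P Q in E2.
  pose proof (Hp (hadd (hscal (mkC 1 0) x) (hscal (mkC (-p1) (-p2)) y))) as E3.
  rewrite (f_quad f _ _ x y F) in E3. cbn [Cre Cim] in E3. fold p1 p2 P Q in E3.
  assert (HP : 0 <= P) by apply Hp. assert (HQ : 0 <= Q) by apply Hp.
  set (m := p1 * p1 + p2 * p2). assert (Hm : 0 <= m) by (unfold m; nra).
  assert (E1' : 0 <= Q * (P * Q - m)) by (unfold m; nra).
  assert (E2' : 0 <= P * (P * Q - m)) by (unfold m; nra).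
  assert (E3' : 0 <= P + m * Q - 2 * m) by (unfold m; nra).
  fold m.
  destruct (Rle_lt_or_eq_dec 0 Q HQ) as [HQ'|HQ'].
  - apply Rmult_le_reg_l with Q; auto. nra.
  - destruct (Rle_lt_or_eq_dec 0 P HP) as [HP'|HP'].
    + apply Rmult_le_reg_l with P; auto. nra.
    + subst P Q. rewrite <- HQ', <- HP' in *. nra.
Qed.

Lemma nf_ge0 {H : CHilbert} (f : H -> H -> C) x : 0 <= nf f x.
Proof. apply sqrt_pos. Qed.

Lemma nf_sq {H : CHilbert} (f : H -> H -> C) x : isform f -> nf f x * nf f x = Cre (f x x).
Proof. intros (_&_&_&Hp). apply sqrt_sqrt, Hp. Qed.

Lemma f_CS {H : CHilbert} (f : H -> H -> C) (x y : H) : isform f -> Cmod (f x y) <= nf f x * nf f y.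
Proof. intro F. apply le_of_sq. pose proof (nf_ge0 f x); pose proof (nf_ge0 f y); nra.
  rewrite Cmod_sq. replace (nf f x * nf f y * (nf f x * nf f y)) with ((nf f x * nf f x) * (nf f y * nf f y)) by ring.
  rewrite !(nf_sq f _ F). apply f_CS2; auto. Qed.

Lemma f_CSre {H : CHilbert} (f : H -> H -> C) (x y : H) : isform f -> Cre (f x y) <= nf f x * nf f y.
Proof. intro F. eapply Rle_trans. apply Re_le_Cmod. apply f_CS; auto. Qed.

Lemma f_zero_l {H : CHilbert} (f : H -> H -> C) y : isform f -> f hzero y = C0.
Proof. intros (_&Hs&_&_). rewrite <- (hscal_0 (@hzero H)), Hs. apply Ceq; csimpl; ring. Qed.

Lemma nf_zero {H : CHilbert} (f : H -> H -> C) : isform f -> nf f hzero = 0.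
Proof. intro F. unfold nf. rewrite (f_zero_l f _ F). csimpl. apply sqrt_0. Qed.

Lemma hadd_as_comb {H : CHilbert} (x y : H) : hadd x y = hadd (hscal C1 x) (hscal C1 y).
Proof. rewrite !hscal_1. reflexivity. Qed.

Lemma nf_tri {H : CHilbert} (f : H -> H -> C) (x y : H) : isform f -> nf f (hadd x y) <= nf f x + nf f y.
Proof. intro F. unfold nf at 1. apply sqrt_le_sq. pose proof (nf_ge0 f x); pose proof (nf_ge0 f y); lra.
  rewrite hadd_as_comb, (f_quad f _ _ x y F). csimpl.
  pose proof (f_CSre f x y F). rewrite <- (nf_sq f x F), <- (nf_sq f y F). nra. Qed.

Lemma nf_scal {H : CHilbert} (f : H -> H -> C) a x : isform f -> nf f (hscal a x) = Cmod a * nf f x.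
Proof. intro F. pose proof F as (_&Hs&_&_). unfold nf. rewrite Hs, (f_scalr f _ _ _ F).
  unfold Cmod. rewrite <- sqrt_mult. f_equal. pose proof (f_im f x F). csimpl. nra. nra.
  destruct F as (_&_&_&Hp). apply Hp. Qed.

Lemma nf_opp {H : CHilbert} (f : H -> H -> C) x : isform f -> nf f (hopp x) = nf f x.
Proof. intro F. rewrite hopp_scal, (nf_scal f _ _ F), Cmod_real. rewrite Rabs_left by lra. ring. Qed.

Lemma nf_sub {H : CHilbert} (f : H -> H -> C) x y : isform f -> nf f x <= nf f y + nf f (hadd x (hopp y)).
Proof. intro F. replace x with (hadd y (hadd x (hopp y))) at 1. apply nf_tri; auto.
  rewrite (hadd_comm _ x), hadd_assoc, hadd_opp, hadd_0_l. reflexivity. Qed.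

Lemma buzano {H : CHilbert} (f : H -> H -> C) (e u v : H) : isform f -> Cre (f e e) = 1 ->
  2 * (Cmod (f e u) * Cmod (f v e)) <= nf f u * nf f v + Cmod (f v u).
Proof. intros F He. pose proof F as (_&_&Hc&_).
  set (c := f u e).
  set (w := hadd (hscal (mkC (2 * Cre c) (2 * Cim c)) e) (hscal (mkC (-1) 0) u)).
  assert (Hw : nf f w = nf f u).
  { unfold nf, w. f_equal. rewrite (f_quad f _ _ e u F). rewrite He, (Hc u e). fold c. csimpl. ring. }
  assert (Hvw : f v w = Cadd (Cmul (mkC (2 * Cre c) (- (2 * Cim c))) (f v e)) (Cmul (mkC (-1) 0) (f v u))).
  { unfold w. rewrite (f_addr f _ _ _ F), !(f_scalr f _ _ _ F). apply Ceq; csimpl; ring. }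
  assert (E : Cmul (mkC (2 * Cre c) (- (2 * Cim c))) (f v e) = Cadd (f v w) (f v u)).
  { rewrite Hvw. apply Ceq; csimpl; ring. }
  assert (E2 : Cmod (Cmul (mkC (2 * Cre c) (- (2 * Cim c))) (f v e)) = 2 * (Cmod (f e u) * Cmod (f v e))).
  { rewrite Cmod_mul, (Hc u e). fold c. rewrite Cmod_conj.
    replace (mkC (2 * Cre c) (- (2 * Cim c))) with (Cmul (mkC 2 0) (Cconj c)) by (apply Ceq; csimpl; ring).
    rewrite Cmod_mul, Cmod_conj, Cmod_real, Rabs_pos_eq by lra. ring. }
  rewrite <- E2, E. eapply Rle_trans. apply Cmod_tri.
  pose proof (f_CS f v w F). rewrite Hw in H0. nra. Qed.

Lemma archi (r : R) : exists n : nat, r < INR n.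
Proof. destruct (archimed (Rabs r)) as [H1 _].
  assert (Hz : (0 <= up (Rabs r))%Z).
  { apply le_IZR. pose proof (Rabs_pos r). lra. }
  exists (Z.to_nat (up (Rabs r))). rewrite INR_IZR_INZ, Z2Nat.id by exact Hz.
  pose proof (Rle_abs r). lra. Qed.

Lemma bernoulli (q : R) (n : nat) : 1 <= q -> 1 + INR n * (q - 1) <= q ^ n.
Proof. intro Hq. induction n as [|n IH]. simpl. lra.
  rewrite S_INR. simpl. pose proof (pos_INR n).
  assert (0 <= (q - 1) * (q ^ n - (1 + INR n * (q - 1)))) by (apply Rmult_le_pos; lra).
  assert (0 <= INR n * ((q - 1) * (q - 1))) by (apply Rmult_le_pos; nra). nra. Qed.

Lemma pow2_ge (k : nat) : (k <= Nat.pow 2 k)%nat.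
Proof. induction k. simpl; lia. simpl. pose proof (Nat.pow_nonzero 2 k ltac:(lia)). lia. Qed.

Lemma le_eps (a b : R) : (forall e, 0 < e -> a <= b + e) -> a <= b.
Proof. intro Hb. destruct (Rle_or_lt a b) as [|Hlt]; auto.
  specialize (Hb ((a - b) / 2)). lra. Qed.

Lemma bounded_nonneg {H : CHilbert} (T : H -> H) : is_bounded T ->
  exists M, 0 <= M /\ forall x, hnorm (T x) <= M * hnorm x.
Proof. intros [_ [M HM]]. exists (Rmax M 0). split. apply Rmax_r.
  intro x. eapply Rle_trans. apply HM. apply Rmult_le_compat_r. apply sqrt_pos. apply Rmax_l. Qed.

Lemma A_selfadj {H : CHilbert} (A : H -> H) : positive_op A -> forall u v, hinner (A u) v = hinner u (A v).
Proof. intros [[HL _] Hpos] u v. pose proof (hinner_form H) as F.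
  pose proof (Hpos (hadd (hscal (mkC 1 0) u) (hscal (mkC 1 0) v))) as [E1 _].
  pose proof (Hpos (hadd (hscal (mkC 1 0) u) (hscal (mkC 0 1) v))) as [E2 _].
  rewrite (lin_comb A _ _ _ _ HL), (f_bil _ _ _ _ _ _ _ _ _ F) in E1.
  rewrite (lin_comb A _ _ _ _ HL), (f_bil _ _ _ _ _ _ _ _ _ F) in E2.
  destruct (Hpos u) as [Hu _]. destruct (Hpos v) as [Hv _].
  rewrite (hinner_conj _ (A v) u). apply Ceq; csimpl; lra. Qed.

Lemma innerA_form {H : CHilbert} (A : H -> H) : positive_op A -> isform (innerA A).
Proof. intro P. pose proof P as [[[Ha Hs] _] Hpos]. unfold innerA. split; [|split; [|split]].
  - intros x y z. rewrite Ha. apply hinner_addl.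
  - intros a x y. rewrite Hs. apply hinner_scall.
  - intros x y. rewrite (A_selfadj A P). apply hinner_conj.
  - intro x. apply Hpos. Qed.

Lemma A_bound {H : CHilbert} (A : H -> H) : positive_op A ->
  exists K, 0 <= K /\ forall v, Cre (innerA A v v) <= K * (hnorm v * hnorm v).
Proof. intro P. pose proof P as [HB _]. destruct (bounded_nonneg A HB) as [M [HM0 HM]].
  exists M. split; auto. intro v. unfold innerA.
  eapply Rle_trans. apply (f_CSre _ _ _ (hinner_form H)).
  change (hnorm (A v) * hnorm v <= M * (hnorm v * hnorm v)).
  pose proof (sqrt_pos (Cre (hinner v v))) as Hn. change (0 <= hnorm v) in Hn. specialize (HM v). nra. Qed.

Lemma normA_le {H : CHilbert} (A : H -> H) : positive_op A ->
  exists K, 0 <= K /\ forall v, normA A v <= K * hnorm v.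
Proof. intro P. destruct (A_bound A P) as [K [HK HKv]]. exists (sqrt K). split. apply sqrt_pos.
  intro v. unfold normA. apply sqrt_le_sq. pose proof (sqrt_pos K); pose proof (sqrt_pos (Cre (hinner v v))).
  change (0 <= hnorm v) in H1. nra.
  replace (sqrt K * hnorm v * (sqrt K * hnorm v)) with ((sqrt K * sqrt K) * (hnorm v * hnorm v)) by ring.
  rewrite sqrt_sqrt by auto. apply HKv. Qed.

Lemma sharp_prop {H : CHilbert} (A X Xs : H -> H) : positive_op A -> is_sharpA A X Xs ->
  forall p q, innerA A (X p) q = innerA A p (Xs q).
Proof. intros P [[_ [S [HS HA]]] _] p q. unfold innerA.
  rewrite (A_selfadj A P), HS, <- HA, (A_selfadj A P). reflexivity. Qed.

Lemma Asym_bound {H : CHilbert} (A S : H -> H) (M : R) : positive_op A -> 0 <= M ->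
  (forall x, hnorm (S x) <= M * hnorm x) ->
  (forall u v, innerA A (S u) v = innerA A u (S v)) ->
  forall z, normA A (S z) <= M * normA A z.
Proof.
  intros P HM0 HM Hsym z. pose proof (innerA_form A P) as F.
  destruct (normA_le A P) as [K [HK HKv]].
  assert (Hsymn : forall n u v, innerA A (Nat.iter n S u) v = innerA A u (Nat.iter n S v)).
  { induction n; intros u v. reflexivity.
    rewrite Nat.iter_succ, Hsym, IHn, <- Nat.iter_succ_r. reflexivity. }
  assert (Hbn : forall n x, hnorm (Nat.iter n S x) <= M ^ n * hnorm x).
  { induction n; intro x. simpl. lra. simpl. eapply Rle_trans. apply HM.
    rewrite Rmult_assoc. apply Rmult_le_compat_l; auto. }
  assert (Hkey : forall m, normA A (Nat.iter m S z) * normA A (Nat.iter m S z)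
                           <= normA A z * normA A (Nat.iter (m + m) S z)).
  { intro m. change (nf (innerA A) (Nat.iter m S z) * nf (innerA A) (Nat.iter m S z)
                     <= nf (innerA A) z * nf (innerA A) (Nat.iter (m + m) S z)).
    rewrite (nf_sq _ _ F), Hsymn, <- Nat.iter_add. apply f_CSre; auto. }
  set (g := fun k => normA A (Nat.iter (Nat.pow 2 k) S z)).
  set (d := normA A z).
  assert (Hg : forall k, g k * g k <= d * g (Datatypes.S k)).
  { intro k. unfold g, d. replace (Nat.pow 2 (Datatypes.S k)) with (Nat.pow 2 k + Nat.pow 2 k)%nat by (simpl; lia).
    apply Hkey. }
  assert (HgB : forall k, g k <= K * M ^ (Nat.pow 2 k) * hnorm z).
  { intro k. unfold g. eapply Rle_trans. apply HKv. rewrite Rmult_assoc. apply Rmult_le_compat_l; auto. }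
  assert (Hg0 : g 0%nat = normA A (S z)) by reflexivity.
  assert (Hgpos : forall k, 0 <= g k) by (intro; apply sqrt_pos).
  assert (Hd : 0 <= d) by apply sqrt_pos.
  assert (Hz : 0 <= hnorm z) by apply sqrt_pos.
  rewrite <- Hg0. fold d.
  destruct (Rle_or_lt (g 0%nat) (M * d)) as [Hle|Hlt]; auto. exfalso.
  destruct (Rle_lt_or_eq_dec 0 d Hd) as [Hdp|Hd0].
  2:{ specialize (Hg 0%nat). rewrite <- Hd0 in Hg, Hlt. pose proof (Hgpos 0%nat). nra. }
  assert (Hpow : forall k, (g 0%nat / d) ^ (Nat.pow 2 k) <= g k / d).
  { induction k. simpl. lra.
    replace (Nat.pow 2 (Datatypes.S k)) with (Nat.pow 2 k + Nat.pow 2 k)%nat by (simpl; lia).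
    rewrite pow_add. assert (Ha : 0 <= (g 0%nat / d) ^ (Nat.pow 2 k)).
    { apply pow_le. unfold Rdiv. apply Rmult_le_pos; auto. left; apply Rinv_0_lt_compat; auto. }
    eapply Rle_trans. apply Rmult_le_compat; eauto.
    unfold Rdiv. replace (g k * / d * (g k * / d)) with ((g k * g k) * (/ d * / d)) by ring.
    replace (g (Datatypes.S k) * / d) with ((d * g (Datatypes.S k)) * (/ d * / d)) by (field; lra).
    apply Rmult_le_compat_r. assert (0 < / d) by (apply Rinv_0_lt_compat; auto). nra. apply Hg. }
  destruct (Rle_lt_or_eq_dec 0 M HM0) as [HMp|HM0'].
  2:{ specialize (Hpow 0%nat). specialize (HgB 0%nat). rewrite <- HM0' in HgB, Hlt.
      simpl in Hpow, HgB. assert (g 0%nat <= 0) by lra.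
      assert (g 0%nat / d <= 0) by (unfold Rdiv; assert (0 < / d) by (apply Rinv_0_lt_compat; auto); nra).
      assert (0 < g 0%nat / d) by (apply Rdiv_lt_0_compat; lra). lra. }
  set (q := g 0%nat / (d * M)).
  assert (Hq : 1 < q).
  { unfold q. apply Rmult_lt_reg_r with (d * M). nra. unfold Rdiv. rewrite Rmult_assoc, Rinv_l by nra. lra. }
  set (Cc := K * hnorm z / d).
  destruct (archi (Cc / (q - 1))) as [k Hk].
  specialize (Hpow (Nat.pow 2 k)).
  assert (Hbk : g (Nat.pow 2 k) / d <= Cc * M ^ (Nat.pow 2 (Nat.pow 2 k))).
  { unfold Cc. specialize (HgB (Nat.pow 2 k)). unfold Rdiv.
    replace (K * hnorm z * / d * M ^ Nat.pow 2 (Nat.pow 2 k)) with ((K * M ^ Nat.pow 2 (Nat.pow 2 k) * hnorm z) * / d) by ring.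
    apply Rmult_le_compat_r; auto. left; apply Rinv_0_lt_compat; auto. }
  assert (Heq : g 0%nat / d = q * M) by (unfold q; field; lra).
  rewrite Heq, Rpow_mult_distr in Hpow.
  assert (HMn : 0 < M ^ Nat.pow 2 (Nat.pow 2 k)) by (apply pow_lt; auto).
  assert (Hqn : q ^ Nat.pow 2 (Nat.pow 2 k) <= Cc) by nra.
  pose proof (bernoulli q (Nat.pow 2 (Nat.pow 2 k)) ltac:(lra)).
  pose proof (le_INR _ _ (Nat.le_trans _ _ _ (pow2_ge k) (pow2_ge (Nat.pow 2 k)))).
  assert (Cc < INR k * (q - 1)).
  { apply Rmult_lt_reg_r with (/ (q - 1)). apply Rinv_0_lt_compat; lra.
    rewrite Rmult_assoc, Rinv_r by lra. unfold Rdiv in Hk. lra. }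
  nra.
Qed.

Fixpoint dseq {H : CHilbert} (A : H -> H) (c : R) (z : H) (k : nat) : H :=
  match k with
  | O => z
  | Datatypes.S k => let r := dseq A c z k in hadd (hscal C1 r) (hscal (mkC (- c) 0) (A r))
  end.

Lemma hadd_swap4 {H : CHilbert} (p q s t : H) : hadd (hadd p q) (hadd s t) = hadd (hadd p s) (hadd q t).
Proof. rewrite <- !hadd_assoc. f_equal. rewrite !hadd_assoc. f_equal. apply hadd_comm. Qed.

Lemma hsq {H : CHilbert} (x : H) : hnorm x * hnorm x = Cre (hinner x x).
Proof. apply (nf_sq _ _ (hinner_form H)). Qed.

Lemma density {H : CHilbert} (A : H -> H) : positive_op A ->
  forall z e, 0 < e -> exists y, normA A (hadd z (hopp (A y))) < e.
Proof.
  intros P z e He. pose proof (innerA_form A P) as F. pose proof (hinner_form H) as Fh.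
  pose proof P as [[HL _] _].
  destruct (bounded_nonneg A (proj1 P)) as [M0 [HM0 HM]].
  set (M := M0 + 1). assert (HMp : 0 < M) by (unfold M; lra).
  set (c := / M). assert (Hc : 0 < c) by (apply Rinv_0_lt_compat; auto).
  assert (HcM : c * M = 1) by (unfold c; field; lra).
  assert (Hnn : forall v : H, 0 <= hnorm v) by (intro; apply sqrt_pos).
  assert (B1 : forall v, Cre (innerA A v v) <= hnorm (A v) * hnorm v).
  { intro v. apply (f_CSre _ _ _ Fh). }
  assert (B2 : forall v, Cre (innerA A (A v) (A v)) <= M * (hnorm (A v) * hnorm (A v))).
  { intro v. eapply Rle_trans. apply B1. specialize (HM (A v)). pose proof (Hnn (A v)). unfold M. nra. }
  assert (Hfp : forall v : H, 0 <= Cre (innerA A v v)) by (intro; apply F).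
  assert (B3 : forall v, hnorm (A v) * hnorm (A v) <= M * Cre (innerA A v v)).
  { intro v. pose proof (f_CSre _ v (A v) F) as E. change (innerA A v (A v)) with (hinner (A v) (A v)) in E.
    rewrite <- hsq in E. pose proof (nf_sq _ v F) as Ev. pose proof (nf_sq _ (A v) F) as Eav.
    pose proof (B2 v) as B2v. rewrite <- Eav in B2v.
    set (t := hnorm (A v) * hnorm (A v)) in *. set (a := nf (innerA A) v) in *. set (b := nf (innerA A) (A v)) in *.
    assert (0 <= a) by apply nf_ge0. assert (0 <= b) by apply nf_ge0. assert (0 <= t) by (unfold t; nra).
    rewrite <- Ev. assert (t * t <= (a * a) * (b * b)) by nra.
    destruct (Rle_lt_or_eq_dec 0 t H2) as [Ht|Ht]; [|rewrite <- Ht; nra].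
    apply Rmult_le_reg_r with t; auto. nra. }
  set (r := dseq A c z).
  assert (Hinv : forall k, exists y, hadd (r k) (A y) = z).
  { induction k as [|k [y Hy]].
    - exists hzero. simpl. rewrite (lin_zero A HL). apply hadd_0.
    - exists (hadd y (hscal (mkC c 0) (r k))).
      change (r (Datatypes.S k)) with (hadd (hscal C1 (r k)) (hscal (mkC (- c) 0) (A (r k)))).
      destruct HL as [Ha Hs]. rewrite Ha, Hs, hscal_1, hadd_swap4, Hy, hscal_add_0 by (cbn; lra). apply hadd_0. }
  set (f := fun k => Cre (innerA A (r k) (r k))).
  assert (Hstep : forall k, r (Datatypes.S k) = hadd (hscal C1 (r k)) (hscal (mkC (- c) 0) (A (r k)))) by reflexivity.
  assert (D1 : forall k, hnorm (r (Datatypes.S k)) <= hnorm (r k)).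
  { intro k. apply le_of_sq. auto. rewrite !hsq, Hstep, (f_quad _ _ _ _ _ Fh). cbn [Cre Cim Defs.C1].
    rewrite (hinner_conj _ (A (r k)) (r k)). cbn [Cre Cim Cconj]. fold (innerA A (r k) (r k)).
    rewrite <- (hsq (A (r k))). pose proof (B3 (r k)). pose proof (Hfp (r k)).
    assert (c * c * (M * Cre (innerA A (r k) (r k))) = c * Cre (innerA A (r k) (r k))) by
      (rewrite <- Rmult_assoc, (Rmult_assoc c c M), HcM; ring).
    assert (c * c * (hnorm (A (r k)) * hnorm (A (r k))) <= c * c * (M * Cre (innerA A (r k) (r k))))
      by (apply Rmult_le_compat_l; nra).
    nra. }
  assert (D1' : forall k, hnorm (r k) <= hnorm z).
  { induction k. apply Rle_refl. eapply Rle_trans. apply D1. auto. }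
  assert (D2 : forall k, f (Datatypes.S k) <= f k - c * (hnorm (A (r k)) * hnorm (A (r k)))).
  { intro k. unfold f. rewrite Hstep, (f_quad _ _ _ _ _ F). cbn [Cre Cim Defs.C1].
    change (innerA A (r k) (A (r k))) with (hinner (A (r k)) (A (r k))).
    rewrite (f_im _ _ Fh), <- hsq. pose proof (B2 (r k)). pose proof (Hnn (A (r k))).
    assert (c * c * (M * (hnorm (A (r k)) * hnorm (A (r k)))) = c * (hnorm (A (r k)) * hnorm (A (r k)))) by
      (rewrite <- Rmult_assoc, (Rmult_assoc c c M), HcM; ring).
    nra. }
  assert (D3 : forall k, f k <= hnorm (A (r k)) * hnorm z).
  { intro k. eapply Rle_trans. apply B1. apply Rmult_le_compat_l; auto. }
  assert (Hex : exists k, f k < e * e).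
  { destruct (classic (exists k, f k < e * e)) as [|Hn]; auto. exfalso.
    assert (Hall : forall k, e * e <= f k).
    { intro k. destruct (Rle_or_lt (e * e) (f k)); auto. exfalso; apply Hn; eauto. }
    set (dl := e * e). assert (Hdl : 0 < dl) by (unfold dl; nra).
    assert (Hzp : 0 < hnorm z).
    { destruct (Rle_lt_or_eq_dec 0 _ (Hnn z)) as [|Hz]; auto.
      specialize (Hall 0%nat). specialize (D3 0%nat). rewrite <- Hz in D3. fold dl in Hall. nra. }
    set (ep := c * ((dl / hnorm z) * (dl / hnorm z))).
    assert (Hep : 0 < ep) by (unfold ep; apply Rmult_lt_0_compat; auto; apply Rmult_lt_0_compat; apply Rdiv_lt_0_compat; auto).
    assert (Hdec : forall k, f (Datatypes.S k) <= f k - ep).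
    { intro k. eapply Rle_trans. apply D2. unfold ep. apply Rplus_le_compat_l. apply Ropp_le_contravar.
      apply Rmult_le_compat_l. lra.
      assert (dl / hnorm z <= hnorm (A (r k))).
      { unfold Rdiv. apply Rmult_le_reg_r with (hnorm z); auto. rewrite Rmult_assoc, Rinv_l by lra.
        specialize (Hall k). specialize (D3 k). fold dl in Hall. lra. }
      assert (0 <= dl / hnorm z) by (left; apply Rdiv_lt_0_compat; auto). nra. }
    assert (Hlin : forall k, f k <= f 0%nat - INR k * ep).
    { induction k. simpl. lra. rewrite S_INR. specialize (Hdec k). lra. }
    destruct (archi (f 0%nat / ep)) as [k Hk]. specialize (Hlin k). specialize (Hall k).
    assert (f 0%nat < INR k * ep).
    { apply Rmult_lt_reg_r with (/ ep). apply Rinv_0_lt_compat; auto.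
      rewrite Rmult_assoc, Rinv_r by lra. unfold Rdiv in Hk. lra. }
    fold dl in Hall. lra. }
  destruct Hex as [k Hk]. destruct (Hinv k) as [y Hy]. exists y.
  rewrite <- Hy, <- hadd_assoc, hadd_opp, hadd_0.
  change (sqrt (f k) < e). rewrite <- (sqrt_square e) by lra. apply sqrt_lt_1_alt. split. apply Hfp. exact Hk.
Qed.

Lemma supR_spec (E : R -> Prop) (B : R) : (forall r, E r -> r <= B) -> 0 <= B ->
  is_lub (fun r => E r \/ r = 0) (supR E).
Proof. intros HB H0. unfold supR. apply epsilon_spec.
  destruct (completeness (fun r => E r \/ r = 0)) as [m Hm].
  - exists B. intros r [Hr|Hr]; [apply HB; auto | lra].
  - exists 0; auto.
  - exists m; exact Hm. Qed.

Lemma supR_ge (E : R -> Prop) (B r : R) : (forall r, E r -> r <= B) -> 0 <= B -> E r -> r <= supR E.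
Proof. intros HB H0 Er. destruct (supR_spec E B HB H0) as [Hu _]. apply Hu. auto. Qed.

Lemma supR_ge0 (E : R -> Prop) (B : R) : (forall r, E r -> r <= B) -> 0 <= B -> 0 <= supR E.
Proof. intros HB H0. destruct (supR_spec E B HB H0) as [Hu _]. apply Hu. auto. Qed.

Lemma supR_le (E : R -> Prop) (B : R) : (forall r, E r -> r <= B) -> 0 <= B -> supR E <= B.
Proof. intros HB H0. destruct (supR_spec E B HB H0) as [_ Hl]. apply Hl. intros r [Hr|Hr]; [apply HB; auto|lra]. Qed.

Lemma sharp_conj {H : CHilbert} (A X Xs : H -> H) : positive_op A -> is_sharpA A X Xs ->
  forall p q, innerA A q (X p) = innerA A (Xs q) p.
Proof. intros P SX p q. pose proof (innerA_form A P) as (_&_&Hc&_).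
  rewrite (Hc (X p) q), (sharp_prop A X Xs P SX), <- Hc. reflexivity. Qed.

Lemma sym_XXs {H : CHilbert} (A X Xs : H -> H) : positive_op A -> is_sharpA A X Xs ->
  forall u v, innerA A (X (Xs u)) v = innerA A u (X (Xs v)).
Proof. intros P SX u v. rewrite (sharp_prop A X Xs P SX), (sharp_conj A X Xs P SX). reflexivity. Qed.

Lemma bound_comp {H : CHilbert} (X Xs : H -> H) : is_bounded X -> is_bounded Xs ->
  exists M, 0 <= M /\ forall x, hnorm (X (Xs x)) <= M * hnorm x.
Proof. intros BX BXs. destruct (bounded_nonneg X BX) as [M1 [H1 HM1]].
  destruct (bounded_nonneg Xs BXs) as [M2 [H2 HM2]]. exists (M1 * M2). split. nra.
  intro x. eapply Rle_trans. apply HM1. rewrite Rmult_assoc. apply Rmult_le_compat_l; auto. Qed.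

Lemma nA_sharp_sq {H : CHilbert} (A X Xs : H -> H) (M : R) : positive_op A -> is_sharpA A X Xs ->
  (forall z, normA A (X (Xs z)) <= M * normA A z) ->
  forall z, normA A (Xs z) * normA A (Xs z) <= M * (normA A z * normA A z).
Proof. intros P SX HM z. pose proof (innerA_form A P) as F.
  change (nf (innerA A) (Xs z) * nf (innerA A) (Xs z) <= M * (normA A z * normA A z)).
  rewrite (nf_sq _ _ F), <- (sharp_prop A X Xs P SX).
  eapply Rle_trans. apply (f_CSre _ _ _ F). change (normA A (X (Xs z)) * normA A z <= M * (normA A z * normA A z)).
  pose proof (sqrt_pos (Cre (innerA A z z))). change (0 <= normA A z) in H0.
  specialize (HM z). nra. Qed.

Theorem mainTheorem18 (H : CHilbert) (A X Y Xs Ys : H -> H) :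
  positive_op A ->
  in_BA A X -> in_BA A Y ->
  is_sharpA A X Xs -> is_sharpA A Y Ys ->
  wA A (fun x => Ys (X x)) <=
    opnormA A (fun x => hadd (X (Xs x)) (Y (Ys x))) / 4
    + wA A (fun x => X (Ys x)) / 2.
Proof.
  intros P [BX _] [BY _] SX SY.
  pose proof (innerA_form A P) as F. pose proof (hinner_form H) as Fh.
  pose proof SX as [[BXs _] _]. pose proof SY as [[BYs _] _].
  pose proof BX as [LX _]. pose proof BY as [LY _]. pose proof BXs as [LXs _]. pose proof BYs as [LYs _].
  set (f := innerA A).
  set (nA := normA A).
  assert (HnA : forall v, 0 <= nA v) by (intro; apply sqrt_pos).
  destruct (bound_comp X Xs BX BXs) as [MXX0 [HMXX0 HMXX]].
  destruct (bound_comp Y Ys BY BYs) as [MYY0 [HMYY0 HMYY]].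
  pose proof (Asym_bound A _ MXX0 P HMXX0 HMXX (sym_XXs A X Xs P SX)) as bXX.
  pose proof (Asym_bound A _ MYY0 P HMYY0 HMYY (sym_XXs A Y Ys P SY)) as bYY.
  pose proof (nA_sharp_sq A X Xs MXX0 P SX bXX) as bXs.
  pose proof (nA_sharp_sq A Y Ys MYY0 P SY bYY) as bYs.
  set (T := fun x => hadd (X (Xs x)) (Y (Ys x))).
  assert (Tsym : forall u v, f (T u) v = f u (T v)).
  { intros u v. unfold T, f. pose proof F as (Ha&_&_&_). rewrite Ha, (f_addr _ _ _ _ F).
    rewrite (sym_XXs A X Xs P SX), (sym_XXs A Y Ys P SY). reflexivity. }
  assert (Tadd : forall p q, T (hadd p q) = hadd (T p) (T q)).
  { intros p q. unfold T. rewrite (proj1 LXs), (proj1 LX), (proj1 LYs), (proj1 LY). apply hadd_swap4. }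
  assert (TH : forall x, hnorm (T x) <= (MXX0 + MYY0) * hnorm x).
  { intro x. unfold T. eapply Rle_trans. apply (nf_tri _ _ _ Fh).
    pose proof (HMXX x). pose proof (HMYY x). change (hnorm (X (Xs x)) + hnorm (Y (Ys x)) <= (MXX0 + MYY0) * hnorm x). lra. }
  pose proof (Asym_bound A T (MXX0 + MYY0) P ltac:(lra) TH Tsym) as bT.
  set (MT := MXX0 + MYY0).
  set (EN := fun r => exists x, in_closure_range A x /\ x <> hzero /\ r = normA A (T x) / normA A x).
  assert (ENb : forall r, EN r -> r <= MT).
  { intros r [x [_ [_ ->]]]. destruct (Rle_lt_or_eq_dec 0 _ (HnA x)) as [Hp|H0].
    - unfold Rdiv. apply Rmult_le_reg_r with (nA x); auto. rewrite Rmult_assoc, Rinv_l, Rmult_1_r by lra. apply bT.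
    - change (normA A x) with (nA x). rewrite <- H0. unfold Rdiv. rewrite Rinv_0. unfold MT. lra. }
  assert (HMT : 0 <= MT) by (unfold MT; lra).
  set (N := opnormA A T).
  assert (HN0 : 0 <= N) by (apply (supR_ge0 EN MT); auto).
  assert (NB0 : forall r, nA r > 0 -> in_closure_range A r -> nA (T r) <= N * nA r).
  { intros r Hr Hc. assert (Hne : r <> hzero).
    { intro E. subst r. unfold nA in Hr. change (0 < nf (innerA A) hzero) in Hr. rewrite (nf_zero _ F) in Hr. lra. }
    assert (E : nA (T r) / nA r <= N). { apply (supR_ge EN MT); auto. exists r; auto. }
    unfold Rdiv in E. apply Rmult_le_reg_r with (/ nA r). apply Rinv_0_lt_compat; auto.
    rewrite Rmult_assoc, Rinv_r by lra. lra. }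
  assert (NB : forall z, nA (T z) <= N * nA z).
  { intro z. apply le_eps. intros e He.
    set (dl := e / (N + MT + 1)). assert (Hdl : 0 < dl) by (apply Rdiv_lt_0_compat; lra).
    destruct (density A P z dl Hdl) as [y Hy].
    set (v := hadd z (hopp (A y))) in Hy. set (r := A y).
    assert (Ez : z = hadd r v).
    { unfold v, r. rewrite (hadd_comm _ z), hadd_assoc, hadd_opp, hadd_0_l. reflexivity. }
    assert (E1 : nA (T z) <= nA (T r) + MT * nA v).
    { rewrite Ez, Tadd. eapply Rle_trans. apply (nf_tri _ _ _ F). pose proof (bT v).
      change (normA A (T r) + normA A (T v) <= nA (T r) + MT * nA v). unfold nA, MT. lra. }
    assert (E2 : nA (T r) <= N * nA r).
    { destruct (Rle_lt_or_eq_dec 0 _ (HnA r)) as [Hp|H0].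
      - apply NB0; auto. intros eps Heps. exists y. unfold hsub, r. rewrite hadd_opp.
        change (nf (@hinner H) hzero < eps). rewrite (nf_zero _ Fh). exact Heps.
      - pose proof (bT r). fold nA in H1. rewrite <- H0 in *. nra. }
    assert (E3 : nA r <= nA z + nA v).
    { eapply Rle_trans. apply (nf_sub _ r z F). apply Rplus_le_compat_l.
      replace (hadd r (hopp z)) with (hopp v). rewrite (nf_opp _ _ F). apply Rle_refl.
      unfold v. rewrite hopp_add, hopp_hopp. apply hadd_comm. }
    assert (Hv : nA v <= dl) by (unfold nA; lra).
    assert (N * nA r <= N * (nA z + dl)) by (apply Rmult_le_compat_l; lra).
    assert (MT * nA v <= MT * dl) by (apply Rmult_le_compat_l; lra).
    assert ((N + MT) * dl <= e).
    { unfold dl. unfold Rdiv. apply Rmult_le_reg_r with (N + MT + 1). lra.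
      rewrite Rmult_assoc, (Rmult_assoc e), Rinv_l by lra. nra. }
    lra. }
  set (U := fun x => X (Ys x)).
  set (EW := fun r => exists lam, numrangeA A U lam /\ r = Cmod lam).
  assert (EWb : forall r, EW r -> r <= (MXX0 + MYY0) / 2).
  { intros r [lam [[x [Hx ->]] ->]]. unfold U. change (innerA A (X (Ys x)) x) with (f (X (Ys x)) x).
    unfold f. rewrite (sharp_prop A X Xs P SX). eapply Rle_trans. apply (f_CS _ _ _ F).
    change (nA (Ys x) * nA (Xs x) <= (MXX0 + MYY0) / 2).
    pose proof (bXs x). pose proof (bYs x). fold nA in H0, H1. change (normA A x) with (nA x) in Hx. rewrite Hx in H0, H1.
    pose proof (HnA (Ys x)). pose proof (HnA (Xs x)).
    pose proof (Rle_0_sqr (nA (Ys x) - nA (Xs x))). unfold Rsqr in *. lra. }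
  set (W := wA A U).
  assert (HW0 : 0 <= W) by (apply (supR_ge0 EW ((MXX0 + MYY0) / 2)); auto; lra).
  assert (WB : forall z, Cmod (f (U z) z) <= W * (nA z * nA z)).
  { intro z. destruct (Rle_lt_or_eq_dec 0 _ (HnA z)) as [Hp|H0].
    - set (c := mkC (/ nA z) 0). set (z' := hscal c z).
      assert (Hz' : nA z' = 1).
      { unfold z'. change (nf (innerA A) (hscal c z) = 1). rewrite (nf_scal _ _ _ F). unfold c. rewrite Cmod_real.
        change (Rabs (/ nA z) * nA z = 1).
        rewrite Rabs_pos_eq by (left; apply Rinv_0_lt_compat; auto). field. lra. }
      assert (Hel : Cmod (f (U z') z') <= W).
      { apply (supR_ge EW ((MXX0 + MYY0) / 2)); auto. lra. exists (f (U z') z'). split; auto. exists z'. split; auto. }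
      assert (EU : U z' = hscal c (U z)).
      { unfold U, z'. rewrite (proj2 LYs), (proj2 LX). reflexivity. }
      rewrite EU in Hel. unfold z' in Hel. pose proof F as (_&Hs&_&_).
      fold f in Hs. rewrite Hs, (f_scalr _ _ _ _ F), !Cmod_mul, Cmod_conj in Hel.
      unfold c in Hel. rewrite Cmod_real, Rabs_pos_eq in Hel by (left; apply Rinv_0_lt_compat; auto).
      assert (0 < / nA z) by (apply Rinv_0_lt_compat; auto).
      apply Rmult_le_reg_l with (/ nA z * / nA z). nra.
      replace (/ nA z * / nA z * (W * (nA z * nA z))) with W by (field; lra).
      change (innerA A (U z) z) with (f (U z) z) in Hel. lra.
    - eapply Rle_trans. apply (f_CS _ _ _ F). change (nA (U z) * nA z <= W * (nA z * nA z)). rewrite <- H0. lra. }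
  set (K := N / 4 + W / 2).
  assert (HK : 0 <= K) by (unfold K; lra).
  apply (supR_le _ K); auto.
  intros r [lam [[x [Hx ->]] ->]].
  change (normA A x) with (nA x) in Hx.
  assert (Hxx : Cre (f x x) = 1).
  { change (Cre (innerA A x x) = 1). rewrite <- (nf_sq _ x F). change (nA x * nA x = 1). rewrite Hx. ring. }
  set (a := X x). set (b := Y x).
  assert (Elam : innerA A (Ys (X x)) x = f a b).
  { pose proof F as (_&_&Hc&_). unfold f, a, b. rewrite Hc, <- (sharp_prop A Y Ys P SY), <- Hc. reflexivity. }
  cbv beta. change (Cmod (innerA A (Ys (X x)) x) <= K). rewrite Elam.
  assert (Kb : forall w, Cmod (f a w) * Cmod (f w b) <= K * (nA w * nA w)).
  { intro w. unfold a, b, f. rewrite (sharp_prop A X Xs P SX), (sharp_conj A Y Ys P SY).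
    pose proof (buzano _ x (Xs w) (Ys w) F Hxx) as Bz.
    rewrite <- (sharp_prop A X Xs P SX (Ys w) w) in Bz. fold f in Bz. fold f. change (f (X (Ys w)) w) with (f (U w) w) in Bz.
    pose proof (WB w) as Wb.
    assert (Hs : nf f (Xs w) * nf f (Xs w) + nf f (Ys w) * nf f (Ys w) <= N * (nA w * nA w)).
    { unfold f. rewrite (nf_sq _ (Xs w) F), (nf_sq _ (Ys w) F).
      rewrite <- (sharp_prop A X Xs P SX), <- (sharp_prop A Y Ys P SY).
      assert (ET : Cre (innerA A (T w) w) = Cre (innerA A (X (Xs w)) w) + Cre (innerA A (Y (Ys w)) w))
        by (pose proof F as (Ha&_&_&_); unfold T; rewrite Ha; reflexivity).
      rewrite <- ET. eapply Rle_trans. apply (f_CSre _ _ _ F). change (nA (T w) * nA w <= N * (nA w * nA w)).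
      pose proof (NB w). pose proof (HnA w). nra. }
    pose proof (nf_ge0 f (Xs w)). pose proof (nf_ge0 f (Ys w)).
    assert (nf f (Xs w) * nf f (Ys w) <= (nf f (Xs w) * nf f (Xs w) + nf f (Ys w) * nf f (Ys w)) / 2)
      by (pose proof (Rle_0_sqr (nf f (Xs w) - nf f (Ys w))); unfold Rsqr in *; lra).
    unfold K. fold f. lra. }
  set (p := f a b).
  set (w := hadd (hscal C1 a) (hscal p b)).
  pose proof (Kb w) as Kw.
  set (Pa := Cre (f a a)). set (Qb := Cre (f b b)).
  set (m := Cre p * Cre p + Cim p * Cim p).
  assert (HPa : 0 <= Pa) by apply F. assert (HQb : 0 <= Qb) by apply F.
  assert (CS : m <= Pa * Qb) by apply (f_CS2 _ _ _ F).
  assert (E1 : Cmod (f a w) = Pa + m).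
  { unfold w. rewrite (f_addr _ _ _ _ F), !(f_scalr _ _ _ _ F). change (innerA A a b) with p.
    change (innerA A a a) with (f a a).
    rewrite <- (Rabs_pos_eq (Pa + m)) by (unfold m; nra). rewrite <- Cmod_real. f_equal.
    pose proof (f_im _ a F) as Hi. change (innerA A a a) with (f a a) in Hi.
    apply Ceq; csimpl; unfold Pa, m; nra. }
  assert (E2 : Cmod (f w b) = Cmod p * (1 + Qb)).
  { unfold w. pose proof F as (Ha&Hs&_&_). rewrite Ha, !Hs. change (innerA A a b) with p. change (innerA A b b) with (f b b).
    replace (Cadd (Cmul C1 p) (Cmul p (f b b))) with (Cmul p (mkC (1 + Qb) 0)).
    rewrite Cmod_mul, Cmod_real, Rabs_pos_eq by lra. reflexivity.
    pose proof (f_im _ b F) as Hi. change (innerA A b b) with (f b b) in Hi.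
    apply Ceq; csimpl; unfold Qb; nra. }
  assert (E3 : nA w * nA w = Pa + m * Qb + 2 * m).
  { unfold nA. change (nf (innerA A) w * nf (innerA A) w = Pa + m * Qb + 2 * m).
    rewrite (nf_sq _ _ F). unfold w. rewrite (f_quad _ _ _ _ _ F). fold f. fold Pa Qb p. csimpl. unfold m. ring. }
  rewrite E1, E2, E3 in Kw.
  pose proof (Cmod_ge0 p) as Hp0. pose proof (Cmod_sq p) as Hpsq. fold m in Hpsq.
  destruct (Rle_lt_or_eq_dec 0 _ Hp0) as [Hpp|Hp00]; [|rewrite <- Hp00; exact HK].
  assert (Hm : 0 < m) by nra.
  assert (Cmod p * (Pa + m * Qb + 2 * m) <= (Pa + m) * (Cmod p * (1 + Qb))) by nra.
  apply Rmult_le_reg_r with (Pa + m * Qb + 2 * m). nra. nra.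
Qed.
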